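(* Let $\mathcal C$ be a small cylinder category. Weak equivalences in $\widetilde{\mathcal C}$ satisfy 2-out-of-3: for composable $f:X\to Y$, $g:Y\to Z$ in $\widetilde{\mathcal C}$, if two of $f$, $g$, $g\circ f$ are weak equivalences then so is the third.
   Context: A cylinder category is a category $\mathcal C$ with two classes of morphisms, the cofibrations and the weak equivalences (morphisms in both classes are called trivial cofibrations), such that: (1) both classes contain all isomorphisms and are closed under composition; (2) weak equivalences satisfy 2-out-of-6: if $f,g,h$ are composable and $f\circ g$, $g\circ h$ are weak equivalences then $f,g,h,f\circ g\circ h$ are; (3) $\mathcal C$ has an initial object $0$ and every $0\to X$ is a cofibration; (4) pushouts of cofibrations along arbitrary maps exist and are cofibrations; (5) pushouts of trivial cofibrations are trivial cofibrations; (6) for every object $X$ the codiagonal $X\sqcup X\to X$ factors as a cofibration $X\sqcup X\hookrightarrow IX$ followed by a weak equivalence $IX\to X$; (7) every trivial cofibration admits a retraction. For a cofibration $A\hookrightarrow B$, a relative cylinder object is a factorization $B\sqcup_A B\hookrightarrow I_AB\xrightarrow{\sim}B$ of the codiagonal into a cofibration followed by a weak equivalence. For a small cylinder category $\mathcal C$, $\widetilde{\mathcal C}$ is the category of presheaves of sets on $\mathcal C$ sending the initial object to a singleton and pushouts along cofibrations to pullbacks of sets; $\mathcal C$ is identified with its image under the Yoneda embedding. A morphism $f:X\to Y$ of $\widetilde{\mathcal C}$ is a weak equivalence if for every cofibration $i:A\hookrightarrow B$ of $\mathcal C$ and every commutative square with top $u:A\to X$ and bottom $w:B\to Y$ (so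 $f\circ u=w\circ i$), there exist $a:B\to X$ with $a\circ i=u$ and $h:I_AB\to Y$ for some relative cylinder object such that $h$ restricted along the two inclusions $B\to I_AB$ is $f\circ a$ and $w$. *)

(* Defs.v *)
Unset Implicit Arguments.


Record Category := {
  Ob :> Type;
  Hom : Ob -> Ob -> Type;
  idm : forall X, Hom X X;
  comp : forall X Y Z, Hom Y Z -> Hom X Y -> Hom X Z;
  comp_assoc : forall X Y Z W (h : Hom Z W) (g : Hom Y Z) (f : Hom X Y),
      comp X Z W h (comp X Y Z g f) = comp X Y W (comp Y Z W h g) f;
  comp_id_l : forall X Y (f : Hom X Y), comp X Y Y (idm Y) f = f;
  comp_id_r : forall X Y (f : Hom X Y), comp X X Y f (idm X) = f
}.

Arguments Hom {c} X Y.
Arguments idm {c} X.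
Arguments comp {c X Y Z} g f.

Definition is_iso {C : Category} {X Y : C} (f : Hom X Y) : Prop :=
  exists g : Hom Y X, comp g f = idm X /\ comp f g = idm Y.

Definition is_initial {C : Category} (O : C) : Prop :=
  forall X : C, exists u : Hom O X, forall v : Hom O X, v = u.

(* The commutative square
      A --i--> B
      |f       |g
      v        v
      C --k--> D
   is a pushout square. *)
Definition is_pushout {C : Category} {A B C' D : C}
  (i : Hom A B) (f : Hom A C') (g : Hom B D) (k : Hom C' D) : Prop :=
  comp g i = comp k f /\
  forall (T : C) (b : Hom B T) (c : Hom C' T), comp b i = comp c f ->
    exists d : Hom D T, (comp d g = b /\ comp d k = c) /\
      forall d' : Hom D T, comp d' g = b -> comp d' k = c -> d' = d.

Record CylinderCategory := {
  cat :> Category;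
  cof : forall X Y : cat, Hom X Y -> Prop;
  we  : forall X Y : cat, Hom X Y -> Prop;
  iso_cof : forall (X Y : cat) (f : Hom X Y), is_iso f -> cof _ _ f;
  iso_we  : forall (X Y : cat) (f : Hom X Y), is_iso f -> we _ _ f;
  cof_comp : forall (X Y Z : cat) (g : Hom Y Z) (f : Hom X Y),
      cof _ _ f -> cof _ _ g -> cof _ _ (comp g f);
  we_comp : forall (X Y Z : cat) (g : Hom Y Z) (f : Hom X Y),
      we _ _ f -> we _ _ g -> we _ _ (comp g f);
  we_2of6 : forall (W X Y Z : cat) (h : Hom W X) (g : Hom X Y) (f : Hom Y Z),
      we _ _ (comp f g) -> we _ _ (comp g h) ->
      we _ _ f /\ we _ _ g /\ we _ _ h /\ we _ _ (comp f (comp g h));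
  init : cat;
  init_initial : is_initial init;
  init_cof : forall (X : cat) (u : Hom init X), cof _ _ u;
  pushout_exists : forall (A B C' : cat) (i : Hom A B) (f : Hom A C'),
      cof _ _ i -> exists (D : cat) (g : Hom B D) (k : Hom C' D), is_pushout i f g k;
  pushout_cof : forall (A B C' D : cat) (i : Hom A B) (f : Hom A C')
      (g : Hom B D) (k : Hom C' D), cof _ _ i -> is_pushout i f g k -> cof _ _ k;
  pushout_tcof : forall (A B C' D : cat) (i : Hom A B) (f : Hom A C')
      (g : Hom B D) (k : Hom C' D), cof _ _ i -> we _ _ i -> is_pushout i f g k ->
      cof _ _ k /\ we _ _ k;
  (* (6) the codiagonal X + X -> X (coproduct = pushout over the initial
     object) factors as a cofibration followed by a weak equivalence *)
  cylinder : forall X : cat,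
      exists (S : cat) (in1 in2 : Hom X S) (u : Hom init X),
        is_pushout u u in1 in2 /\
        exists (I : cat) (j : Hom S I) (p : Hom I X),
          cof _ _ j /\ we _ _ p /\ comp p (comp j in1) = idm X /\ comp p (comp j in2) = idm X;
  tcof_retraction : forall (A B : cat) (i : Hom A B),
      cof _ _ i -> we _ _ i -> exists r : Hom B A, comp r i = idm A
}.

Arguments cof {c X Y} _.
Arguments we {c X Y} _.
Arguments init c : clear implicits.

(* Relative cylinder for a cofibration i : A -> B, together with the two
   inclusions j0, j1 : B -> I_A B: there is a pushout B +_A B (of i along i)
   with injections in1, in2, and a factorization of the codiagonal
   B +_A B -> B as a cofibration j : B +_A B -> I followed by a weak
   equivalence p : I -> B.  (p o j is the codiagonal iff p o j o in1 = id and
   p o j o in2 = id, by the universal property.)  j0 = j o in1, j1 = j o in2. *)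
Definition rel_cylinder {C : CylinderCategory} {A B : C} (i : Hom A B)
  (I : C) (j0 j1 : Hom B I) : Prop :=
  exists (P : C) (in1 in2 : Hom B P) (j : Hom P I) (p : Hom I B),
    is_pushout i i in1 in2 /\ cof j /\ we p /\
    comp p (comp j in1) = idm B /\ comp p (comp j in2) = idm B /\
    j0 = comp j in1 /\ j1 = comp j in2.

(* ---------- The category C~ of "left exact" presheaves ---------- *)
Record Presheaf (C : CylinderCategory) := {
  ps :> C -> Type;
  psmap : forall X Y : C, Hom X Y -> ps Y -> ps X;
  psmap_id : forall (X : C) (x : ps X), psmap X X (idm X) x = x;
  psmap_comp : forall (X Y Z : C) (g : Hom Y Z) (f : Hom X Y) (z : ps Z),
      psmap X Z (comp g f) z = psmap X Y f (psmap Y Z g z);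
  ps_init : exists x0 : ps (init C), forall x : ps (init C), x = x0;
  ps_pushout : forall (A B C' D : C) (i : Hom A B) (f : Hom A C')
      (g : Hom B D) (k : Hom C' D), cof i -> is_pushout i f g k ->
      forall (b : ps B) (c : ps C'), psmap A B i b = psmap A C' f c ->
        exists d : ps D, (psmap B D g d = b /\ psmap C' D k d = c) /\
          forall d' : ps D, psmap B D g d' = b -> psmap C' D k d' = c -> d' = d
}.

Arguments psmap {C} p {X Y} f _.

Record PMor {C : CylinderCategory} (F G : Presheaf C) := {
  pm :> forall X : C, F X -> G X;
  pm_nat : forall (X Y : C) (f : Hom X Y) (y : F Y),
      pm X (psmap F f y) = psmap G f (pm Y y)
}.

Arguments pm {C F G} _ X _.
Arguments pm_nat {C F G} _ {X Y} f y.

Definition pmor_comp {C : CylinderCategory} {F G H : Presheaf C}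
  (g : PMor G H) (f : PMor F G) : PMor F H.
Proof.
  refine {| pm := fun X x => g X (f X x) |}.
  intros X Y h y. rewrite (pm_nat f), (pm_nat g). reflexivity.
Defined.

(* By Yoneda, a map u : A -> X from a representable (A in C) to X in C~ is
   an element u of X(A), and precomposition with a : A' -> A is psmap X a.
   Weak equivalences of C~: *)
Definition pweq {C : CylinderCategory} {X Y : Presheaf C} (f : PMor X Y) : Prop :=
  forall (A B : C) (i : Hom A B), cof i ->
  forall (u : X A) (w : Y B), f A u = psmap Y i w ->
    exists a : X B, psmap X i a = u /\
      exists (I : C) (j0 j1 : Hom B I) (h : Y I),
        rel_cylinder i I j0 j1 /\
        psmap Y j0 h = f B a /\ psmap Y j1 h = w.

(* Main.v *)
Require Import Defs.

Local Notation "g ∘ f" := (comp g f) (at level 40, left associativity).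

Lemma cA {C : Category} {X Y Z W : C} (h : Hom Z W) (g : Hom Y Z) (f : Hom X Y) :
  h ∘ (g ∘ f) = h ∘ g ∘ f.
Proof. apply comp_assoc. Qed.
Lemma cid_l {C : Category} {X Y : C} (f : Hom X Y) : idm Y ∘ f = f.
Proof. apply comp_id_l. Qed.
Lemma cid_r {C : Category} {X Y : C} (f : Hom X Y) : f ∘ idm X = f.
Proof. apply comp_id_r. Qed.

Ltac norm := repeat rewrite <- cA; repeat rewrite cid_l; repeat rewrite cid_r.

Lemma eq_r {C : Category} {X Y Y' Z : C} (a : Hom Y Z) (b : Hom X Y) (c : Hom Y' Z) (d : Hom X Y') :
  a ∘ b = c ∘ d -> forall W (y : Hom W X), a ∘ (b ∘ y) = c ∘ (d ∘ y).
Proof. intros E W y. rewrite !cA, E. reflexivity. Qed.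

Lemma iso_id {C : Category} (X : C) : is_iso (idm X).
Proof. exists (idm X). split; apply comp_id_l. Qed.

Lemma we_id (C : CylinderCategory) (X : C) : we (idm X).
Proof. apply iso_we, iso_id. Qed.

Lemma we_cancel_r (C : CylinderCategory) {X Y Z : C} (g : Hom Y Z) (h : Hom X Y) :
  we h -> we (g ∘ h) -> we g.
Proof.
  intros Hh Hgh.
  destruct (we_2of6 C X X Y Z (idm X) h g) as [Hg _].
  - exact Hgh.
  - rewrite cid_r. exact Hh.
  - exact Hg.
Qed.

Lemma we_cancel_l (C : CylinderCategory) {X Y Z : C} (g : Hom Y Z) (h : Hom X Y) :
  we g -> we (g ∘ h) -> we h.
Proof.
  intros Hg Hgh.
  destruct (we_2of6 C X Y Z Z h g (idm Z)) as [_ [_ [Hh _]]].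
  - rewrite cid_l. exact Hg.
  - exact Hgh.
  - exact Hh.
Qed.

Lemma we_sec (C : CylinderCategory) {X Y : C} (p : Hom Y X) (h : Hom X Y) :
  we p -> p ∘ h = idm X -> we h.
Proof. intros Hp E. apply (we_cancel_l C p h Hp). rewrite E. apply we_id. Qed.

Lemma we_ret (C : CylinderCategory) {X Y : C} (r : Hom Y X) (h : Hom X Y) :
  we h -> r ∘ h = idm X -> we r.
Proof. intros Hh E. apply (we_cancel_r C r h Hh). rewrite E. apply we_id. Qed.


Lemma po_comm {C : Category} {A B C' D : C} {i : Hom A B} {f : Hom A C'} {g : Hom B D} {k : Hom C' D} :
  is_pushout i f g k -> g ∘ i = k ∘ f.
Proof. intros [H _]; exact H. Qed.

Lemma po_sym {C : Category} {A B C' D : C} {i : Hom A B} {f : Hom A C'} {g : Hom B D} {k : Hom C' D} :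
  is_pushout i f g k -> is_pushout f i k g.
Proof.
  intros [Hc Hu]. split; [symmetry; exact Hc|].
  intros T b c Hbc. destruct (Hu T c b (eq_sym Hbc)) as [d [[H1 H2] H3]].
  exists d. split; [split; assumption|]. intros d' H1' H2'. apply H3; assumption.
Qed.

Lemma po_ex {C : Category} {A B C' D : C} {i : Hom A B} {f : Hom A C'} {g : Hom B D} {k : Hom C' D} :
  is_pushout i f g k -> forall T (b : Hom B T) (c : Hom C' T), b ∘ i = c ∘ f ->
  exists d, d ∘ g = b /\ d ∘ k = c.
Proof. intros [_ Hu] T b c E. destruct (Hu T b c E) as [d [H _]]. exists d; exact H. Qed.

Lemma po_uniq {C : Category} {A B C' D : C} {i : Hom A B} {f : Hom A C'} {g : Hom B D} {k : Hom C' D} :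
  is_pushout i f g k -> forall T (d d' : Hom D T), d ∘ g = d' ∘ g -> d ∘ k = d' ∘ k -> d = d'.
Proof.
  intros [Hc Hu] T d d' E1 E2.
  destruct (Hu T (d ∘ g) (d ∘ k)) as [e [_ He]].
  { norm. rewrite Hc. reflexivity. }
  transitivity e. apply He; reflexivity. symmetry; apply He; symmetry; assumption.
Qed.

Lemma po_paste {C : Category} {A B C' D B' D' : C} {i : Hom A B} {f : Hom A C'} {g : Hom B D} {k : Hom C' D}
  {i' : Hom B B'} {g' : Hom B' D'} {k' : Hom D D'} :
  is_pushout i f g k -> is_pushout i' g g' k' -> is_pushout (i' ∘ i) f g' (k' ∘ k).
Proof.
  intros H1 H2. split.
  - norm. rewrite (eq_r _ _ _ _ (po_comm H2)). rewrite (po_comm H1). reflexivity.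
  - intros T b c E.
    destruct (po_ex H1 T (b ∘ i') c) as [d1 [Hd1g Hd1k]].
    { norm. exact E. }
    destruct (po_ex H2 T b d1) as [d [Hdg Hdk]].
    { symmetry; exact Hd1g. }
    exists d. split.
    + split; [exact Hdg|]. rewrite cA, Hdk. exact Hd1k.
    + intros d' H1' H2'.
      assert (Ed1 : d' ∘ k' = d1).
      { apply (po_uniq H1).
        - rewrite Hd1g. rewrite <- cA, <- (po_comm H2), cA, H1'. reflexivity.
        - rewrite Hd1k. rewrite <- cA. exact H2'. }
      apply (po_uniq H2).
      * rewrite H1', Hdg. reflexivity.
      * rewrite Ed1, Hdk. reflexivity.
Qed.

Lemma ps_glue {C : CylinderCategory} (F : Presheaf C) {A B C' D : C} (i : Hom A B) (f : Hom A C')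
  (g : Hom B D) (k : Hom C' D) :
  cof i -> is_pushout i f g k -> forall (b : F B) (c : F C'), psmap F i b = psmap F f c ->
  exists d : F D, psmap F g d = b /\ psmap F k d = c.
Proof.
  intros Hi Hp b c E.
  destruct (ps_pushout _ F _ _ _ _ i f g k Hi Hp b c E) as [d [H _]]. exists d; exact H.
Qed.

Lemma ps_uniq {C : CylinderCategory} (F : Presheaf C) {A B C' D : C} (i : Hom A B) (f : Hom A C')
  (g : Hom B D) (k : Hom C' D) :
  cof i -> is_pushout i f g k -> forall (d d' : F D),
  psmap F g d = psmap F g d' -> psmap F k d = psmap F k d' -> d = d'.
Proof.
  intros Hi Hp d d' E1 E2.
  assert (E : psmap F i (psmap F g d) = psmap F f (psmap F k d)).
  { rewrite <- !psmap_comp. rewrite (po_comm Hp). reflexivity. }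
  destruct (ps_pushout _ F _ _ _ _ i f g k Hi Hp _ _ E) as [e [_ He]].
  transitivity e. apply He; reflexivity. symmetry; apply He; symmetry; assumption.
Qed.


Lemma rel_cyl_ends (C : CylinderCategory) {A B I : C} (i : Hom A B) (j0 j1 : Hom B I) :
  cof i -> rel_cylinder i I j0 j1 -> (cof j0 /\ we j0) /\ (cof j1 /\ we j1).
Proof.
  intros Hi [P [in1 [in2 [j [p [Hpo [Hj [Hp [Hp1 [Hp2 [E0 E1]]]]]]]]]]].
  pose proof (pushout_cof C _ _ _ _ i i in1 in2 Hi Hpo) as Hin2.
  pose proof (pushout_cof C _ _ _ _ i i in2 in1 Hi (po_sym Hpo)) as Hin1.
  subst j0 j1. split; split.
  - apply cof_comp; assumption.
  - apply (we_sec C p); [exact Hp | exact Hp1].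
  - apply cof_comp; assumption.
  - apply (we_sec C p); [exact Hp | exact Hp2].
Qed.

Lemma rel_cyl_rebase (C : CylinderCategory) {A B I P : C} (i : Hom A B) (j0 j1 : Hom B I)
  (in1 in2 : Hom B P) :
  rel_cylinder i I j0 j1 -> is_pushout i i in1 in2 ->
  exists (j : Hom P I) (p : Hom I B), cof j /\ we p /\ p ∘ (j ∘ in1) = idm B /\
    p ∘ (j ∘ in2) = idm B /\ j0 = j ∘ in1 /\ j1 = j ∘ in2.
Proof.
  intros [P' [in1' [in2' [j' [p [Hpo' [Hj [Hp [Hp1 [Hp2 [E0 E1]]]]]]]]]]] Hpo.
  destruct (po_ex Hpo P' in1' in2') as [phi [Hphi1 Hphi2]]. { exact (po_comm Hpo'). }
  destruct (po_ex Hpo' P in1 in2) as [psi [Hpsi1 Hpsi2]]. { exact (po_comm Hpo). }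
  assert (Hiso : is_iso phi).
  { exists psi. split.
    - apply (po_uniq Hpo); norm; [rewrite Hphi1, Hpsi1 | rewrite Hphi2, Hpsi2]; reflexivity.
    - apply (po_uniq Hpo'); norm; [rewrite Hpsi1, Hphi1 | rewrite Hpsi2, Hphi2]; reflexivity. }
  exists (j' ∘ phi), p. repeat split.
  - apply cof_comp; [apply iso_cof; exact Hiso | exact Hj].
  - exact Hp.
  - norm. rewrite Hphi1. exact Hp1.
  - norm. rewrite Hphi2. exact Hp2.
  - norm. rewrite Hphi1. exact E0.
  - norm. rewrite Hphi2. exact E1.
Qed.

Lemma outer_po {C : Category} {A B P T : C} (i : Hom A B) (in1 in2 : Hom B P) (t1 t2 : Hom P T)
  (m : Hom P T) :
  is_pushout i i in1 in2 -> is_pushout in2 in1 t1 t2 ->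
  m ∘ in1 = t1 ∘ in1 -> m ∘ in2 = t2 ∘ in2 ->
  is_pushout i (in1 ∘ i) (t1 ∘ in2) m.
Proof.
  intros HP HT Em1 Em2.
  pose proof (po_comm HP) as HPc. pose proof (po_comm HT) as HTc.
  split.
  - norm. rewrite (eq_r _ _ _ _ Em1). rewrite HPc. reflexivity.
  - intros T' b c Heq.
    destruct (po_ex HP T' (c ∘ in1) b) as [d1 [Hd11 Hd12]]. { norm. symmetry. exact Heq. }
    destruct (po_ex HP T' b (c ∘ in2)) as [d2 [Hd21 Hd22]].
    { norm. rewrite <- HPc. rewrite Heq. norm. reflexivity. }
    destruct (po_ex HT T' d1 d2) as [d [Hd1 Hd2]]. { rewrite Hd12, Hd21. reflexivity. }
    assert (Hdm : d ∘ m = c).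
    { apply (po_uniq HP).
      - norm. rewrite Em1. rewrite cA, Hd1. exact Hd11.
      - norm. rewrite Em2. rewrite cA, Hd2. exact Hd22. }
    exists d. split; [split|].
    + rewrite cA, Hd1. exact Hd12.
    + exact Hdm.
    + intros d' H1 H2.
      apply (po_uniq HT).
      * rewrite Hd1. apply (po_uniq HP).
        -- rewrite Hd11, <- H2. norm. rewrite Em1. reflexivity.
        -- rewrite Hd12, <- H1. norm. reflexivity.
      * rewrite Hd2. apply (po_uniq HP).
        -- rewrite Hd21, <- H1. norm. rewrite HTc. reflexivity.
        -- rewrite Hd22, <- H2. norm. rewrite Em2. reflexivity.
Qed.

Lemma theta_po {C : Category} {A I E D Pc : C} (h0 : Hom A I) (c : Hom A E) (legI : Hom I D)
  (legE : Hom E D) (kI : Hom I E) (in1 in2 : Hom E Pc) (th : Hom D Pc) :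
  is_pushout h0 c legI legE -> c = kI ∘ h0 -> is_pushout c c in1 in2 ->
  th ∘ legE = in1 -> th ∘ legI = in2 ∘ kI ->
  is_pushout kI legI in2 th.
Proof.
  intros HD Ec HP HE HI. split.
  - symmetry. exact HI.
  - intros T b c' Heq.
    destruct (po_ex HP T (c' ∘ legE) b) as [d [Hd1 Hd2]].
    { norm. rewrite <- (po_comm HD). rewrite Ec. norm. rewrite (eq_r _ _ _ _ Heq). reflexivity. }
    assert (Hdt : d ∘ th = c').
    { apply (po_uniq HD).
      - norm. rewrite HI. rewrite cA, Hd2. exact Heq.
      - norm. rewrite HE. exact Hd1. }
    exists d. split; [split; [exact Hd2 | exact Hdt]|].
    intros d' H1 H2. apply (po_uniq HP).
    + rewrite Hd1, <- H2, <- HE. norm. reflexivity.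
    + rewrite Hd2, H1. reflexivity.
Qed.

Lemma n1_po {C : Category} {A B I E Pi PE : C} (i : Hom A B) (h1 : Hom A I) (kB : Hom B E)
  (kI : Hom I E) (in1 in2 : Hom B Pi) (e1 e2 : Hom E PE) (n1 : Hom Pi PE) :
  is_pushout i h1 kB kI -> is_pushout i i in1 in2 -> is_pushout kI kI e1 e2 ->
  n1 ∘ in1 = e1 ∘ kB -> n1 ∘ in2 = e2 ∘ kB ->
  is_pushout h1 (in1 ∘ i) (e1 ∘ kI) n1.
Proof.
  intros HE HP HPE En1 En2.
  pose proof (po_comm HE) as HEc. pose proof (po_comm HP) as HPc. pose proof (po_comm HPE) as HPEc.
  split.
  - norm. rewrite (eq_r _ _ _ _ En1). rewrite HEc. reflexivity.
  - intros T b c Heq.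
    destruct (po_ex HE T (c ∘ in1) b) as [d1 [Hd1B Hd1I]]. { norm. symmetry. exact Heq. }
    destruct (po_ex HE T (c ∘ in2) b) as [d2 [Hd2B Hd2I]].
    { norm. rewrite <- HPc. rewrite Heq. norm. reflexivity. }
    destruct (po_ex HPE T d1 d2) as [d [Hd1 Hd2]]. { rewrite Hd1I, Hd2I. reflexivity. }
    exists d. split; [split|].
    + rewrite cA, Hd1. exact Hd1I.
    + apply (po_uniq HP).
      * norm. rewrite En1. rewrite cA, Hd1. exact Hd1B.
      * norm. rewrite En2. rewrite cA, Hd2. exact Hd2B.
    + intros d' H1 H2. apply (po_uniq HPE).
      * rewrite Hd1. apply (po_uniq HE).
        -- rewrite Hd1B, <- H2. norm. rewrite En1. reflexivity.
        -- rewrite Hd1I, <- H1. norm. reflexivity.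
      * rewrite Hd2. apply (po_uniq HE).
        -- rewrite Hd2B, <- H2. norm. rewrite En2. reflexivity.
        -- rewrite Hd2I, <- H1. norm. rewrite HPEc. reflexivity.
Qed.

Lemma n2_po {C : Category} {I D E Pc PE V : C} (kI : Hom I E) (legI : Hom I D) (in2 : Hom E Pc)
  (th : Hom D Pc) (e1 e2 : Hom E PE) (v1 v2 : Hom Pc V) (n2 : Hom PE V) :
  is_pushout kI legI in2 th -> is_pushout kI kI e1 e2 -> is_pushout th th v1 v2 ->
  n2 ∘ e1 = v1 ∘ in2 -> n2 ∘ e2 = v2 ∘ in2 ->
  is_pushout legI (e1 ∘ kI) (v1 ∘ th) n2.
Proof.
  intros HT HPE HV En1 En2.
  pose proof (po_comm HT) as HTc. pose proof (po_comm HPE) as HPEc. pose proof (po_comm HV) as HVc.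
  split.
  - norm. rewrite (eq_r _ _ _ _ En1). rewrite HTc. reflexivity.
  - intros T b c Heq.
    destruct (po_ex HT T (c ∘ e1) b) as [d1 [Hd1E Hd1D]]. { norm. symmetry. exact Heq. }
    destruct (po_ex HT T (c ∘ e2) b) as [d2 [Hd2E Hd2D]].
    { norm. rewrite <- HPEc. rewrite Heq. norm. reflexivity. }
    destruct (po_ex HV T d1 d2) as [d [Hd1 Hd2]]. { rewrite Hd1D, Hd2D. reflexivity. }
    exists d. split; [split|].
    + rewrite cA, Hd1. exact Hd1D.
    + apply (po_uniq HPE).
      * norm. rewrite En1. rewrite cA, Hd1. exact Hd1E.
      * norm. rewrite En2. rewrite cA, Hd2. exact Hd2E.
    + intros d' H1 H2. apply (po_uniq HV).
      * rewrite Hd1. apply (po_uniq HT).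
        -- rewrite Hd1E, <- H2. norm. rewrite En1. reflexivity.
        -- rewrite Hd1D, <- H1. norm. reflexivity.
      * rewrite Hd2. apply (po_uniq HT).
        -- rewrite Hd2E, <- H2. norm. rewrite En2. reflexivity.
        -- rewrite Hd2D, <- H1. norm. rewrite HVc. reflexivity.
Qed.


Lemma part_a (C : CylinderCategory) (X Y Z : Presheaf C) (f : PMor X Y) (g : PMor Y Z) :
  pweq f -> pweq g -> pweq (pmor_comp g f).
Proof.
  intros Hf Hg A B i Hi u w Huw. cbn in Huw.
  destruct (Hg A B i Hi (f A u) w Huw) as [b [Hb [I [j0 [j1 [H [Hcyl [HH0 HH1]]]]]]]].
  destruct Hcyl as [P [in1 [in2 [jK [pK [Hpo [HjK [HpK [Hp1 [Hp2 [Ej0 Ej1]]]]]]]]]]].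
  destruct (Hf A B i Hi u b (eq_sym Hb)) as [a [Ha [I' [j0' [j1' [L [Hcyl' [HL0 HL1]]]]]]]].
  destruct (rel_cyl_rebase C i j0' j1' in1 in2 Hcyl' Hpo)
    as [jK' [pK' [HjK' [HpK' [Hp1' [Hp2' [Ej0' Ej1']]]]]]].
  pose proof (pushout_cof C _ _ _ _ i i in1 in2 Hi Hpo) as Hin2.
  destruct (pushout_exists C B P P in2 in1 Hin2) as [T [t1 [t2 HT]]].
  destruct (pushout_exists C P I' T jK' t1 HjK') as [Y1 [y1 [yT HY]]].
  pose proof (po_paste HT HY) as HTY.
  destruct (pushout_exists C P I Y1 jK (yT ∘ t2) HjK) as [Zc [z1 [zY HZ]]].
  pose proof (po_paste (po_sym HTY) HZ) as HZZ.
  (* HZZ : is_pushout (jK ∘ in1) (jK' ∘ in2) z1 (zY ∘ y1) *)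
  assert (Hs0c : cof (jK ∘ in1)).
  { apply cof_comp; [exact (pushout_cof C _ _ _ _ i i in2 in1 Hi (po_sym Hpo)) | exact HjK]. }
  destruct (ps_glue Z (jK ∘ in1) (jK' ∘ in2) z1 (zY ∘ y1) Hs0c HZZ H (g I' L)) as [Phi [HPhi1 HPhi2]].
  { rewrite <- Ej0, HH0, <- pm_nat, <- Ej1', HL1. reflexivity. }
  destruct (po_ex Hpo T (t1 ∘ in1) (t2 ∘ in2)) as [m [Hm1 Hm2]].
  { norm. rewrite (po_comm Hpo). rewrite (eq_r _ _ _ _ (po_comm HT)). rewrite (po_comm Hpo). reflexivity. }
  pose proof (outer_po i in1 in2 t1 t2 m Hpo HT Hm1 Hm2) as Hmpo.
  assert (Hmc : cof m) by exact (pushout_cof C _ _ _ _ _ _ _ _ Hi Hmpo).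
  assert (HyTc : cof yT) by exact (pushout_cof C _ _ _ _ _ _ _ _ HjK' HY).
  assert (HzYc : cof zY) by exact (pushout_cof C _ _ _ _ _ _ _ _ HjK HZ).
  destruct (po_ex HZZ B pK pK') as [pZ [HpZ1 HpZ2]].
  { rewrite Hp1, Hp2'. reflexivity. }
  assert (Hs1w : we (jK' ∘ in2)) by exact (we_sec C pK' _ HpK' Hp2').
  assert (Hs1c : cof (jK' ∘ in2)).
  { apply cof_comp; [exact Hin2 | exact HjK']. }
  destruct (pushout_tcof C _ _ _ _ _ _ _ _ Hs1c Hs1w (po_sym HZZ)) as [_ Hz1w].
  assert (HpZw : we pZ).
  { apply (we_cancel_r C pZ z1 Hz1w). rewrite HpZ1. exact HpK. }
  assert (EJ1 : zY ∘ (yT ∘ m) ∘ in1 = zY ∘ y1 ∘ (jK' ∘ in1)).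
  { norm. rewrite Hm1. rewrite (eq_r _ _ _ _ (po_comm HY)). reflexivity. }
  assert (EJ2 : zY ∘ (yT ∘ m) ∘ in2 = z1 ∘ (jK ∘ in2)).
  { norm. rewrite Hm2. rewrite (eq_r _ _ _ _ (po_comm HZ)). norm. reflexivity. }
  exists a. split; [exact Ha|].
  exists Zc, (zY ∘ (yT ∘ m) ∘ in1), (zY ∘ (yT ∘ m) ∘ in2), Phi. split; [|split].
  - exists P, in1, in2, (zY ∘ (yT ∘ m)), pZ.
    split; [exact Hpo|]. split; [|split; [|split; [|split; [|split; reflexivity]]]].
    + apply cof_comp; [apply cof_comp; assumption | exact HzYc].
    + exact HpZw.
    + rewrite EJ1, cA, HpZ2. exact Hp1'.
    + rewrite EJ2, cA, HpZ1. exact Hp2.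
  - rewrite EJ1, psmap_comp, HPhi2, <- Ej0', <- pm_nat, HL0. reflexivity.
  - rewrite EJ2, psmap_comp, HPhi1, <- Ej1. exact HH1.
Qed.


Lemma part_b (C : CylinderCategory) (X Y Z : Presheaf C) (f : PMor X Y) (g : PMor Y Z) :
  pweq f -> pweq (pmor_comp g f) -> pweq g.
Proof.
  intros Hf Hgf A B i Hi u w Huw.
  destruct (init_initial C A) as [zA _].
  destruct (ps_init _ X) as [x0 _].
  assert (E0 : f (init C) x0 = psmap Y zA u).
  { destruct (ps_init _ Y) as [y0 Hy0]. rewrite (Hy0 (f _ x0)), (Hy0 (psmap Y zA u)). reflexivity. }
  destruct (Hf _ A zA (init_cof C A zA) x0 u E0) as [x [_ [IA [h0 [h1 [H [HcA [HH0 HH1]]]]]]]].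
  destruct (rel_cyl_ends C zA h0 h1 (init_cof C A zA) HcA) as [[Hh0c Hh0w] [Hh1c Hh1w]].
  destruct (pushout_exists C A B IA i h1 Hi) as [E [kB [kI HE]]].
  pose proof (pushout_cof C _ _ _ _ i h1 kB kI Hi HE) as HkI.
  destruct (pushout_tcof C _ _ _ _ h1 i kI kB Hh1c Hh1w (po_sym HE)) as [HkBc HkBw].
  destruct (tcof_retraction C _ _ kB HkBc HkBw) as [r Hr].
  destruct (ps_glue Z i h1 kB kI Hi HE w (g IA H)) as [W [HWB HWI]].
  { rewrite <- pm_nat, HH1. symmetry; exact Huw. }
  remember (kI ∘ h0) as c eqn:Ec.
  assert (Hc : cof c). { rewrite Ec. apply cof_comp; assumption. }
  assert (Ex : (pmor_comp g f) A x = psmap Z c W).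
  { cbn. rewrite Ec, psmap_comp, HWI, <- pm_nat, HH0. reflexivity. }
  destruct (Hgf A E c Hc x W Ex) as [a [Ha [J [s0 [s1 [G [HcJ [HG0 HG1]]]]]]]].
  destruct HcJ as [Pc [in1 [in2 [jJ [pJ [HPc [HjJ [HpJ [HpJ1 [HpJ2 [Es0 Es1]]]]]]]]]]].
  destruct (pushout_exists C A IA E h0 c Hh0c) as [D [legI [legE HD]]].
  destruct (pushout_tcof C _ _ _ _ h0 c legI legE Hh0c Hh0w HD) as [HlegEc HlegEw].
  pose proof (pushout_cof C _ _ _ _ c h0 legE legI Hc (po_sym HD)) as HlegIc.
  destruct (ps_glue Y h0 c legI legE Hh0c HD H (f E a)) as [y0 [Hy0I Hy0E]].
  { rewrite HH0, <- pm_nat, Ha. reflexivity. }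
  pose proof (po_comm HPc) as Hcc.
  destruct (po_ex HD Pc (in2 ∘ kI) in1) as [th [HthI HthE]].
  { rewrite <- cA, <- Ec. symmetry. exact Hcc. }
  pose proof (theta_po h0 c legI legE kI in1 in2 th HD Ec HPc HthE HthI) as Hthpo.
  pose proof (pushout_cof C _ _ _ _ _ _ _ _ HkI Hthpo) as Hthc.
  assert (Htauc : cof (jJ ∘ th)) by (apply cof_comp; assumption).
  assert (Htauw : we (jJ ∘ th)).
  { apply (we_cancel_l C pJ); [exact HpJ|].
    apply (we_cancel_r C _ legE HlegEw). norm. rewrite HthE. rewrite HpJ1. apply we_id. }
  destruct (tcof_retraction C _ _ _ Htauc Htauw) as [rho Hrho].
  assert (Hrho' : forall W (y : Hom W D), rho ∘ (jJ ∘ (th ∘ y)) = y).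
  { intros W0 y'. rewrite !cA. rewrite <- (cA rho jJ th), Hrho. apply cid_l. }
  set (Ups := psmap Y rho y0).
  set (y := psmap Y s1 Ups).
  set (b := psmap Y kB y).
  assert (Es1kI : s1 ∘ kI = jJ ∘ th ∘ legI).
  { rewrite Es1. norm. rewrite HthI. reflexivity. }
  assert (Hbu : psmap Y i b = u).
  { unfold b, y, Ups. rewrite <- !psmap_comp.
    transitivity (psmap Y (legI ∘ h1) y0).
    - f_equal. norm. rewrite (po_comm HE). rewrite (eq_r _ _ _ _ Es1kI). norm.
      rewrite Hrho'. reflexivity.
    - rewrite psmap_comp, Hy0I. exact HH1. }
  destruct (pushout_exists C D Pc Pc th th Hthc) as [V [v1 [v2 HV]]].
  destruct (pushout_exists C Pc J V jJ v1 HjJ) as [V1 [w1 [w2 HV1]]].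
  pose proof (po_paste HV HV1) as HP1.
  destruct (pushout_exists C Pc J V1 jJ (w2 ∘ v2) HjJ) as [Q [z1 [z2 HV2]]].
  pose proof (po_paste (po_sym HP1) HV2) as HQ.
  (* HQ : is_pushout (jJ ∘ th) (jJ ∘ th) z1 (z2 ∘ w1) *)
  assert (Egy0 : psmap Z (jJ ∘ th) G = g D y0).
  { apply (ps_uniq Z h0 c legI legE Hh0c HD).
    - rewrite <- pm_nat, Hy0I, <- psmap_comp. rewrite <- Es1kI, psmap_comp, HG1, HWI. reflexivity.
    - rewrite <- pm_nat, Hy0E, <- psmap_comp. norm. rewrite HthE, <- Es0, HG0. reflexivity. }
  destruct (ps_glue Z (jJ ∘ th) (jJ ∘ th) z1 (z2 ∘ w1) Htauc HQ G (g J Ups)) as [Gam [HGam1 HGam2]].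
  { rewrite Egy0. unfold Ups. rewrite <- pm_nat, <- psmap_comp, Hrho, psmap_id. reflexivity. }
  destruct (pushout_exists C IA E E kI kI HkI) as [PE [e1 [e2 HPE]]].
  destruct (pushout_exists C A B B i i Hi) as [Pi [in1' [in2' HPi]]].
  destruct (po_ex HPi PE (e1 ∘ kB) (e2 ∘ kB)) as [n1 [Hn11 Hn12]].
  { norm. rewrite (po_comm HE). rewrite (eq_r _ _ _ _ (po_comm HPE)). reflexivity. }
  pose proof (n1_po i h1 kB kI in1' in2' e1 e2 n1 HE HPi HPE Hn11 Hn12) as Hn1po.
  pose proof (pushout_cof C _ _ _ _ _ _ _ _ Hh1c Hn1po) as Hn1c.
  destruct (po_ex HPE V (v1 ∘ in2) (v2 ∘ in2)) as [n2 [Hn21 Hn22]].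
  { norm. rewrite <- HthI. rewrite (eq_r _ _ _ _ (po_comm HV)). reflexivity. }
  pose proof (n2_po kI legI in2 th e1 e2 v1 v2 n2 Hthpo HPE HV Hn21 Hn22) as Hn2po.
  pose proof (pushout_cof C _ _ _ _ _ _ _ _ HlegIc Hn2po) as Hn2c.
  pose proof (pushout_cof C _ _ _ _ _ _ _ _ HjJ HV1) as Hw2c.
  pose proof (pushout_cof C _ _ _ _ _ _ _ _ HjJ HV2) as Hz2c.
  set (jf := z2 ∘ (w2 ∘ (n2 ∘ n1))).
  assert (Ej1 : jf ∘ in1' = (z2 ∘ w1) ∘ (s1 ∘ kB)).
  { unfold jf. norm. rewrite Hn11. rewrite (eq_r _ _ _ _ Hn21).
    rewrite (eq_r _ _ _ _ (eq_sym (po_comm HV1))). rewrite Es1. norm. reflexivity. }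
  assert (Ej2 : jf ∘ in2' = z1 ∘ (s1 ∘ kB)).
  { unfold jf. norm. rewrite Hn12. rewrite (eq_r _ _ _ _ Hn22).
    assert (HV2c : forall W0 (y' : Hom W0 Pc), z2 ∘ (w2 ∘ (v2 ∘ y')) = z1 ∘ (jJ ∘ y')).
    { intros W0 y'. rewrite (cA w2), (eq_r _ _ _ _ (eq_sym (po_comm HV2))). reflexivity. }
    rewrite HV2c. rewrite Es1. norm. reflexivity. }
  destruct (po_ex HQ E pJ pJ) as [pQ [HpQ1 HpQ2]]. { reflexivity. }
  destruct (pushout_tcof C _ _ _ _ _ _ _ _ Htauc Htauw HQ) as [_ Hq2w].
  assert (HpQw : we pQ).
  { apply (we_cancel_r C pQ _ Hq2w). rewrite HpQ2. exact HpJ. }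
  assert (Hrw : we r) by exact (we_ret C r kB HkBw Hr).
  exists b. split; [exact Hbu|].
  exists Q, (jf ∘ in1'), (jf ∘ in2'), Gam. split; [|split].
  - exists Pi, in1', in2', jf, (r ∘ pQ).
    split; [exact HPi|]. split; [|split; [|split; [|split; [|split; reflexivity]]]].
    + unfold jf. repeat apply cof_comp; assumption.
    + apply we_comp; assumption.
    + rewrite Ej1. norm. rewrite (cA z2 w1), (cA pQ (z2 ∘ w1)), HpQ2. rewrite Es1. norm.
      rewrite (cA jJ in2), (cA pJ (jJ ∘ in2)), HpJ2. norm. exact Hr.
    + rewrite Ej2. norm. rewrite (cA pQ z1), HpQ1. rewrite Es1. norm.
      rewrite (cA jJ in2), (cA pJ (jJ ∘ in2)), HpJ2. norm. exact Hr.
  - rewrite Ej1, psmap_comp, HGam2, <- pm_nat. unfold b, y. rewrite <- psmap_comp. reflexivity.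
  - rewrite Ej2, psmap_comp, HGam1, psmap_comp, HG1. exact HWB.
Qed.


Lemma part_c (C : CylinderCategory) (X Y Z : Presheaf C) (f : PMor X Y) (g : PMor Y Z) :
  pweq g -> pweq (pmor_comp g f) -> pweq f.
Proof.
  intros Hg Hgf A B i Hi u w Huw.
  assert (E1 : (pmor_comp g f) A u = psmap Z i (g B w)).
  { cbn. rewrite Huw. apply pm_nat. }
  destruct (Hgf A B i Hi u (g B w) E1) as [a [Ha [I [j0 [j1 [h [Hcyl [Hh0 Hh1]]]]]]]].
  pose proof Hcyl as Hcyl'.
  destruct Hcyl' as [P [in1 [in2 [j [p [Hpo [Hj [Hp [Hpj1 [Hpj2 [Ej0 Ej1]]]]]]]]]]].
  destruct (ps_glue Y i i in1 in2 Hi Hpo (f B a) w) as [z [Hz1 Hz2]].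
  { rewrite <- pm_nat, Ha. exact Huw. }
  destruct (Hg P I j Hj z h) as [hy [Hhy _]].
  { apply (ps_uniq Z i i in1 in2 Hi Hpo).
    - rewrite <- pm_nat, Hz1, <- psmap_comp, <- Ej0, Hh0. reflexivity.
    - rewrite <- pm_nat, Hz2, <- psmap_comp, <- Ej1, Hh1. reflexivity. }
  exists a. split; [exact Ha|].
  exists I, j0, j1, hy. split; [exact Hcyl|]. split.
  - rewrite Ej0, psmap_comp, Hhy. exact Hz1.
  - rewrite Ej1, psmap_comp, Hhy. exact Hz2.
Qed.


Theorem mainTheorem7 (C : CylinderCategory) (X Y Z : Presheaf C)
  (f : PMor X Y) (g : PMor Y Z) :
  (pweq f -> pweq g -> pweq (pmor_comp g f)) /\
  (pweq f -> pweq (pmor_comp g f) -> pweq g) /\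
  (pweq g -> pweq (pmor_comp g f) -> pweq f).
Proof.
  split; [|split].
  - apply part_a.
  - apply part_b.
  - apply part_c.
Qed.
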